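(* If $f\in\mathrm{BV}^1$ then for every $n\ge1$, \[ n\,\|B_n(f)-f\|_\infty\le \frac{T_{f'}[-1,1]}{2}+\max\{\|O(f)\|_\infty,\|E(f)\|_\infty\}, \] where $T_{f'}[-1,1]$ is the total variation of $f'$ on $[-1,1]$.
   Context: Nodes: $x_{k,n}:=2k/n-1$, $k=0,\dots,n$. $B_n(f,x):=N_n(f,x)/D_n(x)$ for $x$ not a node, $B_n(f,x_{k,n}):=f(x_{k,n})$, where $N_n(f,x)=\sum_{k=0}^n(-1)^k\frac{f(x_{k,n})}{x-x_{k,n}}$ and $D_n(x)=\sum_{k=0}^n(-1)^k\frac{1}{x-x_{k,n}}$. $\mathrm{BV}^1$: functions $f:[-1,1]\to\mathbb{R}$ differentiable at every point of $[-1,1]$ (one-sided at $\pm1$) whose derivative $f'$ has bounded variation on $[-1,1]$. For $x\in(-1,1)$, $O(f,x):=\frac{f(x)-f(1)}{2(x-1)}-\frac{f(x)-f(-1)}{2(x+1)}$ and $E(f,x):=\frac{f(1)-f(x)}{2(x-1)}+\frac{f(-1)-f(x)}{2(x+1)}$; $\|O(f)\|_\infty,\|E(f)\|_\infty$ are suprema over $x\in(-1,1)$, and $\|B_n(f)-f\|_\infty=\sup_{x\in[-1,1]}|B_n(f,x)-f(x)|$. *)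

(* Defs.v *)
From HB Require Import structures.
From mathcomp Require Import all_boot all_order all_algebra.
From mathcomp Require Import all_classical all_reals all_analysis.
Set Implicit Arguments. Unset Strict Implicit. Unset Printing Implicit Defensive.
Import Order.TTheory GRing.Theory Num.Theory.
Import numFieldNormedType.Exports.
Local Open Scope classical_set_scope.
Local Open Scope ring_scope.

Section Berrut.
Context {R : realType}.

Definition node (n k : nat) : R := 2 * k%:R / n%:R - 1.

Definition is_node (n : nat) (x : R) : Prop := exists2 k : nat, (k <= n)%N & x = node n k.

Definition Nn (n : nat) (f : R -> R) (x : R) : R :=
  \sum_(0 <= k < n.+1) (-1) ^+ k * f (node n k) / (x - node n k).

Definition Dn (n : nat) (x : R) : R :=
  \sum_(0 <= k < n.+1) (-1) ^+ k / (x - node n k).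

Definition Bn (n : nat) (f : R -> R) (x : R) : R :=
  if `[< is_node n x >] then f x else Nn n f x / Dn n x.

Definition Of (f : R -> R) (x : R) : R :=
  (f x - f 1) / (2 * (x - 1)) - (f x - f (-1)) / (2 * (x + 1)).

Definition Ef (f : R -> R) (x : R) : R :=
  (f 1 - f x) / (2 * (x - 1)) + (f (-1) - f x) / (2 * (x + 1)).

(* fp is the derivative of f at every point of [-1,1], taken relative to
   [-1,1] (so one-sided at the endpoints -1 and 1). *)
Definition derivative_on_11 (f fp : R -> R) : Prop :=
  forall x : R, x \in `[-1, 1] ->
    (fun y => (f y - f x) / (y - x)) @
      within [set y | y \in `[-1, 1] /\ y != x] (nbhs x) --> fp x.

Definition BV1 (f fp : R -> R) : Prop :=
  derivative_on_11 f fp /\ bounded_variation (-1) 1 fp.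

Definition supnorm (A : set R) (g : R -> R) : \bar R :=
  ereal_sup [set (`|g x|)%:E | x in A].

End Berrut.

(* Main.v *)
Require Import Defs.
From HB Require Import structures.
From mathcomp Require Import all_boot all_order all_algebra.
From mathcomp Require Import all_classical all_reals all_analysis.
From mathcomp Require Import ring lra zify.
Import Order.TTheory GRing.Theory Num.Theory.
Import numFieldNormedType.Exports.
Local Open Scope classical_set_scope.
Local Open Scope ring_scope.

Section An.
Context {R : realType}.
Variables (f fp : R -> R).
Hypothesis hd : derivative_on_11 f fp.

Lemma dq_ed x : x \in `[-1, 1] -> forall e : R, 0 < e -> exists2 d : R, 0 < d &
  forall y, y \in `[-1, 1] -> y != x -> `|y - x| < d ->
    `|fp x - (f y - f x) / (y - x)| < e.
Proof.
move=> xI e e0; have /cvgrPdist_lt/(_ e e0) := hd x xI.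
rewrite near_withinE => /nbhs_normP [d d0 Hd]; exists d => // y yI yx yd.
apply: Hd; last by split.
by rewrite /= distrC.
Qed.

Lemma cont_within : {within `[-1, 1], continuous f}.
Proof.
apply/subspace_continuousP => x xI.
have xI' : x \in `[-1, 1] by rewrite inE.
apply/cvgrPdist_lt => e e0.
have [d1 d10 Hd1] := @dq_ed x xI' 1 ltr01.
set K := `|fp x| + 1.
have K0 : 0 < K by rewrite /K; apply: ltr_pwDr => //; exact: normr_ge0.
rewrite near_withinE; apply/nbhs_normP; exists (Num.min d1 (e / K)).
  by rewrite /= lt_min d10 divr_gt0.
move=> y /=; rewrite lt_min => /andP[yd1 yeK] yI.
have [->|yx] := eqVneq y x; first by rewrite subrr normr0.
have yI' : y \in `[-1, 1] by rewrite inE.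
have yd1' : `|y - x| < d1 by rewrite distrC.
have H1 := Hd1 y yI' yx yd1'.
have yx0 : y - x != 0 by rewrite subr_eq0.
have -> : f x - f y = - ((f y - f x) / (y - x) * (y - x)) by rewrite divfK // opprB.
rewrite normrN normrM.
have HQ : `|(f y - f x) / (y - x)| <= K.
  have := ler_distD (fp x) ((f y - f x) / (y - x)) 0.
  rewrite !subr0 => h; apply: le_trans h _.
  by rewrite /K addrC lerD2l distrC ltW.
apply: (@le_lt_trans _ _ (K * `|y - x|)).
  by apply: ler_wpM2r => //; exact: normr_ge0.
by rewrite mulrC -ltr_pdivlMr // distrC.
Qed.

Lemma isder (x : R) : x \in `]-1, 1[ -> is_derive x (1:R) f (fp x).
Proof.
move=> xI.
have xI' : x \in `[-1, 1] by move: xI; rewrite !in_itv /= => /andP[h1 h2]; apply/andP; split; lra.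
have H : (fun h : R => h^-1 *: ((f \o shift x) (h *: (1:R)) - f x)) @ 0^' --> fp x.
  apply/cvgrPdist_lt => e e0.
  have [d d0 Hd] := @dq_ed x xI' e e0.
  move: xI; rewrite in_itv /= => /andP[xl xr].
  rewrite near_withinE; apply/nbhs_normP; exists (Num.min d (Num.min (1 - x) (x + 1))).
    by rewrite /= !lt_min d0 /=; apply/andP; split; lra.
  move=> h /=.
  rewrite !lt_min sub0r normrN => /and3P[hdd h1 h2] hne.
  have yI : h + x \in `[-1, 1].
    rewrite in_itv /=; move: h1 h2; rewrite ltr_norml => /andP[a1 a2].
    rewrite ltr_norml => /andP[b1 b2]; apply/andP; split; lra.
  have yx : h + x != x by rewrite -subr_eq0 addrK.
  have := Hd _ yI yx; rewrite addrK => /(_ hdd).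
  by rewrite -[h%:A]/(h * 1) mulr1 -[h^-1 *: _]/(h^-1 * _) mulrC.
apply: DeriveDef; first by apply/cvg_ex; exists (fp x).
exact: cvg_lim.
Qed.

Lemma mvt a b : -1 <= a -> a < b -> b <= 1 ->
  exists2 c, c \in `]a, b[ & f b - f a = fp c * (b - a).
Proof.
move=> ha ab hb; apply: MVT => //.
  move=> z; rewrite in_itv /= => /andP[z1 z2]; apply: isder.
  rewrite in_itv /=; apply/andP; split; lra.
apply: (continuous_subspaceW _ cont_within).
move=> z /=; rewrite !in_itv /= => /andP[z1 z2]; apply/andP; split; lra.
Qed.
End An.

Section Alg.
Context {R : realType}.

Lemma alt_bound (a : nat -> R) : (forall i, 0 <= a i.+1 <= a i) ->
  forall m, a 0 - a 1 <= \sum_(0 <= i < m.+1) (-1) ^+ i * a i <= a 0.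
Proof.
move=> Ha m; elim: m a Ha => [|m IH] a Ha.
  rewrite big_nat1 expr0 mul1r; move: (Ha 0%N) => /andP[h1 h2].
  apply/andP; split; lra.
rewrite big_nat_recl // expr0 mul1r.
have := IH (fun i => a i.+1) (fun i => Ha i.+1) => /= /andP[h1 h2].
under eq_bigr do rewrite exprS mulN1r mulNr.
rewrite sumrN; move: (Ha 0%N) (Ha 1%N) => /andP[h3 h4] /andP[h5 h6].
apply/andP; split; lra.
Qed.

Lemma alt_sum_id (G : nat -> R) n :
  2 * \sum_(0 <= k < n.+1) (-1) ^+ k * G k =
  G 0%N + (-1) ^+ n * G n + \sum_(0 <= k < n) (-1) ^+ k * (G k - G k.+1).
Proof.
elim: n => [|n IH]; first by rewrite big_nat1 big_geq // expr0 !mul1r addr0; lra.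
rewrite big_nat_recr //= [X in _ = _ + X]big_nat_recr //= mulrDr IH exprS.
ring.
Qed.

Lemma chain (G c : nat -> R) (j n : nat) : (j < n)%N ->
  G j = c j -> G j.+1 = c j.+1 ->
  (forall k, (k < j)%N -> `|c k - G k| + `|G k - G k.+1| = `|c k - G k.+1|) ->
  (forall k, (j < k)%N -> (k.+1 <= n)%N ->
     `|G k - G k.+1| + `|G k.+1 - c k.+1| = `|G k - c k.+1|) ->
  \sum_(0 <= k < n) `|G k - G k.+1| <= \sum_(0 <= k < n) `|c k - c k.+1|.
Proof.
move=> jn Gj Gj1 HL HR.
have L : forall m, (m <= j)%N ->
  \sum_((j - m)%N <= i < j) `|G i - G i.+1| + `|c (j - m)%N - G (j - m)%N|
   <= \sum_((j - m)%N <= i < j) `|c i - c i.+1|.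
  elim=> [_|m IH mj]; first by rewrite subn0 !big_geq // Gj subrr normr0 addr0.
  have mj' : (m <= j)%N by apply: ltnW.
  have e : (j - m.+1).+1 = (j - m)%N by rewrite subnSK.
  have lt : (j - m.+1 < j)%N by lia.
  rewrite (@big_ltn _ _ _ (j - m.+1)%N j) // (@big_ltn _ _ _ (j - m.+1)%N j) // e.
  have := IH mj'; have := HL _ lt; rewrite e => h1 h2.
  have h3 := ler_distD (c (j - m)%N) (c (j - m.+1)%N) (G (j - m)%N).
  lra.
have Rr : forall m, (j.+1 + m <= n)%N ->
  \sum_(j.+1 <= i < (j.+1 + m)%N) `|G i - G i.+1| + `|G (j.+1 + m)%N - c (j.+1 + m)%N|
   <= \sum_(j.+1 <= i < (j.+1 + m)%N) `|c i - c i.+1|.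
  elim=> [_|m IH mn]; first by rewrite addn0 !big_geq // Gj1 subrr normr0 addr0.
  have mn' : (j.+1 + m <= n)%N by apply: ltnW; rewrite addnS in mn.
  rewrite addnS (@big_nat_recr _ _ _ (j.+1 + m)%N j.+1) ?leq_addr // (@big_nat_recr _ _ _ (j.+1 + m)%N j.+1) ?leq_addr //=.
  have := IH mn'; have := HR (j.+1 + m)%N; rewrite leq_addr => /(_ isT).
  rewrite -addnS => /(_ mn) h1 h2.
  have h3 := ler_distD (c (j.+1 + m)%N) (G (j.+1 + m)%N) (c (j.+1 + m).+1).
  rewrite addnS in h1 *; lra.
rewrite (@big_cat_nat _ _ _ j 0 n) ?(ltnW jn) // (@big_cat_nat _ _ _ j 0 n) ?(ltnW jn) //=.
rewrite (@big_ltn _ _ _ j n) // (@big_ltn _ _ _ j n) //.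
have := L j (leqnn j); rewrite subnn => h1.
have := Rr (n - j.+1)%N; rewrite subnKC // => /(_ (leqnn n)) h2.
rewrite Gj Gj1.
have h4 : 0 <= `|c 0%N - G 0%N| by apply: normr_ge0.
have h5 : 0 <= `|G n - c n| by apply: normr_ge0.
lra.
Qed.

Lemma tv_chain (g : R -> R) (al : nat -> R) m :
  (forall i, (i < m)%N -> al i <= al i.+1) ->
  al 0%N <= al m /\
  ((\sum_(0 <= i < m) `|g (al i.+1) - g (al i)|)%:E <= total_variation (al 0%N) (al m) g)%E.
Proof.
elim: m => [_|m IH H]; first by rewrite big_geq // total_variationxx; split.
have [h1 h2] := IH (fun i im => H i (ltnW im)).
have h3 := H m (ltnSn m).
split; first exact: le_trans h1 h3.
rewrite big_nat_recr //= EFinD (total_variationD _ h1 h3).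
apply: leeD => //; exact: total_variation_ge.
Qed.

Lemma tv_sub (g : R -> R) a b : -1 <= a -> a <= b -> b <= 1 ->
  (total_variation a b g <= total_variation (-1) 1 g)%E.
Proof.
move=> ha ab hb.
rewrite (total_variationD _ ha (le_trans ab hb)) (total_variationD _ ab hb).
rewrite addeA; apply: (le_trans _ (leeDl _ _)).
  by apply: leeDr; exact: total_variation_ge0.
exact: total_variation_ge0.
Qed.

End Alg.

Section H.
Context {R : realType}.

Lemma sign_sq k : (-1) ^+ k * (-1) ^+ k = 1 :> R.
Proof. by rewrite -exprD addnn -mul2n exprM sqrrN expr1n expr1n. Qed.

Definition slope (f : R -> R) a b := (f b - f a) / (b - a).

Lemma slopeC f a b : slope f a b = slope f b a.
Proof. by rewrite /slope -[f b - f a]opprB -[b - a]opprB invrN mulrNN. Qed.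

Lemma between f p q r : p < q -> q < r ->
  `|slope f p q - slope f p r| + `|slope f p r - slope f q r|
   = `|slope f p q - slope f q r|.
Proof.
move=> pq qr.
have h1 : q - p != 0 by rewrite subr_eq0 gt_eqF.
have h2 : r - p != 0 by rewrite subr_eq0 gt_eqF // (lt_trans pq qr).
have h3 : r - q != 0 by rewrite subr_eq0 gt_eqF.
have e1 : slope f p q - slope f p r = ((r - q) / (r - p)) * (slope f p q - slope f q r).
  rewrite /slope; field; by rewrite h1 h2 h3.
have e2 : slope f p r - slope f q r = ((q - p) / (r - p)) * (slope f p q - slope f q r).
  rewrite /slope; field; by rewrite h1 h2 h3.
have rp : 0 < r - p by rewrite subr_gt0 (lt_trans pq qr).
have g1 : 0 <= (r - q) / (r - p) by apply: divr_ge0; lra.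
have g2 : 0 <= (q - p) / (r - p) by apply: divr_ge0; lra.
rewrite e1 e2 (normrM ((r - q) / (r - p))) (normrM ((q - p) / (r - p))).
rewrite (ger0_norm g1) (ger0_norm g2).
rewrite -mulrDl -mulrDl.
have -> : (r - q + (q - p)) / (r - p) = 1 by rewrite addrA subrK divff.
by rewrite mul1r.
Qed.

Lemma inv_le (u v : R) : 0 < v -> v <= u -> u^-1 <= v^-1.
Proof. by move=> v0 vu; rewrite lef_pV2 ?posrE // (lt_le_trans v0 vu). Qed.

Lemma inv_sum (t s : R) : 0 < t -> 0 < s -> 4 / (t + s) <= t^-1 + s^-1.
Proof.
move=> t0 s0.
have ts : 0 < t + s by apply: addr_gt0.
rewrite ler_pdivrMr //.
have -> : (t^-1 + s^-1) * (t + s) = 4 + (t - s) ^+ 2 / (t * s).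
  field; apply/andP; split; apply: lt0r_neq0 => //.
rewrite lerDl; apply: divr_ge0; [exact: sqr_ge0 | exact: ltW (mulr_gt0 t0 s0)].
Qed.

End H.

Section N.
Context {R : realType}.
Variable n : nat.
Hypothesis n1 : (1 <= n)%N.

Let nR0 : 0 < n%:R :> R.
Proof. by rewrite ltr0n. Qed.
Let nRn0 : n%:R != 0 :> R.
Proof. by rewrite pnatr_eq0 -lt0n. Qed.

Lemma node_lt k k' : (k < k')%N -> node n k < node n k' :> R.
Proof.
move: nR0 nRn0 => hn0 hnn0.
move=> kk; rewrite /node ltrD2r ltr_pM2r ?invr_gt0 // ltr_pM2l // ltr_nat //.
Qed.

Lemma node_le k k' : (k <= k')%N -> node n k <= node n k' :> R.
Proof.
move: nR0 nRn0 => hn0 hnn0.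
rewrite leq_eqVlt => /orP[/eqP->//|h]; exact/ltW/node_lt.
Qed.

Lemma node0 : node n 0 = -1 :> R.
Proof.
move: nR0 nRn0 => hn0 hnn0.
by rewrite /node mulr0 mul0r sub0r. Qed.

Lemma noden : node n n = 1 :> R.
Proof.
move: nR0 nRn0 => hn0 hnn0.
rewrite /node mulfK //; lra. Qed.

Lemma node_step k : node n k.+1 - node n k = 2 / n%:R :> R.
Proof.
move: nR0 nRn0 => hn0 hnn0.
rewrite /node mulrSr; field. exact: hnn0. Qed.

Lemma node_in k : (k <= n)%N -> (-1 <= @node R n k) && (@node R n k <= 1).
Proof.
move: nR0 nRn0 => hn0 hnn0.
move=> kn; rewrite -node0 -noden; apply/andP; split; apply: node_le => //.
Qed.

Lemma locate (x : R) : x \in `[-1, 1] -> ~ is_node n x ->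
  exists2 j, (j < n)%N & node n j < x < node n j.+1.
Proof.
move: nR0 nRn0 => hn0 hnn0.
move=> xI nn; move: xI; rewrite in_itv /= => /andP[x1 x2].
have ex : exists k, (k <= n)%N && (node n k < x).
  exists 0%N; rewrite leq0n /= node0 lt_neqAle x1 andbT.
  by apply/eqP => e; apply: nn; exists 0%N => //; rewrite node0.
have ub : forall k, (k <= n)%N && (node n k < x) -> (k <= n)%N by move=> k /andP[].
case: (ex_maxnP ex ub) => j /andP[jn jx] mx.
have jn' : (j < n)%N.
  rewrite ltn_neqAle jn andbT; apply/eqP => e; move: jx; rewrite e noden; lra.
exists j => //; rewrite jx /= lt_neqAle; apply/andP; split.
  by apply/eqP => e; apply: nn; exists j.+1 => //.
rewrite leNgt; apply/negP => h.
by have := mx j.+1; rewrite jn' h => /(_ isT); rewrite ltnn.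
Qed.

Lemma half_n : (2 / n%:R)^-1 = n%:R / 2 :> R.
Proof. by rewrite invf_div. Qed.

Lemma Dn_bound (x : R) j : (j < n)%N -> node n j < x -> x < node n j.+1 ->
  n%:R <= (-1) ^+ j * Dn n x.
Proof.
move=> jn xl xr.
have hn0 := nR0.
have hn2 : 0 < 2 / n%:R :> R by apply: divr_gt0.
rewrite /Dn (@big_cat_nat _ _ _ j.+1 0 n.+1) //=; last by rewrite ltnS ltnW.
rewrite mulrDr.
have L : (x - node n j)^-1 - n%:R / 2 <=
    (-1) ^+ j * \sum_(0 <= k < j.+1) (-1) ^+ k / (x - node n k).
  pose a i := if (i <= j)%N then (x - node n (j - i)%N)^-1 else 0.
  have e : (-1) ^+ j * \sum_(0 <= k < j.+1) (-1) ^+ k / (x - node n k)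
      = \sum_(0 <= i < j.+1) (-1) ^+ i * a i.
    rewrite big_nat_rev mulr_sumr; apply: eq_big_nat => i /andP[_ ij].
    rewrite add0n subSS /a -ltnS ij.
    have -> : (-1) ^+ j = (-1) ^+ (j - i)%N * (-1) ^+ i :> R.
      by rewrite -exprD subnK // -ltnS.
    set s1 := (-1) ^+ (j - i)%N; set s2 := (-1) ^+ i; set y := (x - node n (j - i)%N)^-1.
    have sq : s1 * s1 = 1 by rewrite /s1 sign_sq.
    transitivity ((s1 * s1) * (s2 * y)); first by rewrite /y; ring.
    by rewrite sq mul1r.
  have Ha : forall i, 0 <= a i.+1 <= a i.
    move=> i; rewrite /a; case: (leqP i.+1 j) => h.
      rewrite (ltnW h).
      have h1 : node n (j - i.+1)%N < node n (j - i)%N :> R by apply: node_lt; lia.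
      have h2 : node n (j - i)%N <= node n j :> R by apply: node_le; lia.
      apply/andP; split; first by rewrite invr_ge0; lra.
      apply: inv_le; lra.
    case: (leqP i j) => h'; last by rewrite lexx.
    rewrite lexx /=.
    have h2 : node n (j - i)%N <= node n j :> R by apply: node_le; lia.
    have h3 : 0 < x - node n (j - i)%N by lra.
    by apply: ltW; rewrite invr_gt0.
  have := @alt_bound _ a Ha j => /andP[lo _].
  rewrite e; apply: le_trans lo; rewrite {1}/a leq0n subn0 lerD2l lerN2 /a.
  case: (leqP 1 j) => h; last by apply: divr_ge0 => //; apply: ltW.
  rewrite -half_n; apply: inv_le => //.
  have ej : (j - 1)%N.+1 = j by lia.
  have := node_step (j - 1)%N; rewrite ej; lra.
have Rr : (node n j.+1 - x)^-1 - n%:R / 2 <=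
    (-1) ^+ j * \sum_(j.+1 <= k < n.+1) (-1) ^+ k / (x - node n k).
  pose b i := if (i <= n - j.+1)%N then (node n (i + j.+1)%N - x)^-1 else 0.
  have e : (-1) ^+ j * \sum_(j.+1 <= k < n.+1) (-1) ^+ k / (x - node n k)
      = \sum_(0 <= i < (n - j.+1)%N.+1) (-1) ^+ i * b i.
    rewrite -{1}(add0n j.+1) big_addn subSS.
    have -> : (n - j)%N = (n - j.+1).+1 by lia.
    rewrite mulr_sumr; apply: eq_big_nat => i /andP[_ hi].
    rewrite /b -ltnS hi exprD exprS -[x - _]opprB invrN.
    set sj := (-1) ^+ j; set si := (-1) ^+ i; set y := (node n (i + j.+1)%N - x)^-1.
    have sq : sj * sj = 1 by rewrite /sj sign_sq.
    transitivity ((sj * sj) * (si * y)); first by rewrite /y; ring.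
    by rewrite sq mul1r.
  have Hb : forall i, 0 <= b i.+1 <= b i.
    move=> i; rewrite /b; case: (leqP i.+1 (n - j.+1)%N) => h.
      rewrite (ltnW h).
      have h1 : node n (i + j.+1)%N < node n (i.+1 + j.+1)%N :> R by apply: node_lt; lia.
      have h2 : node n j.+1 <= node n (i + j.+1)%N :> R by apply: node_le; lia.
      apply/andP; split; first by rewrite invr_ge0; lra.
      apply: inv_le; lra.
    case: (leqP i (n - j.+1)%N) => h'; last by rewrite lexx.
    rewrite lexx /=.
    have h2 : node n j.+1 <= node n (i + j.+1)%N :> R by apply: node_le; lia.
    have h3 : 0 < node n (i + j.+1)%N - x by lra.
    by apply: ltW; rewrite invr_gt0.
  have := @alt_bound _ b Hb (n - j.+1)%N => /andP[lo _].
  rewrite e; apply: le_trans lo; rewrite {1}/b leq0n add0n lerD2l lerN2 /b.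
  case: (leqP 1 (n - j.+1)%N) => h; last by apply: divr_ge0 => //; apply: ltW.
  rewrite -half_n; apply: inv_le => //.
  have := node_step j.+1; rewrite add1n; lra.
have t0 : 0 < x - node n j by lra.
have s0 : 0 < node n j.+1 - x by lra.
have := @inv_sum _ _ _ t0 s0.
have -> : x - node n j + (node n j.+1 - x) = 2 / n%:R by rewrite -(node_step j); ring.
have -> : 4 / (2 / n%:R) = 2 * n%:R :> R by field; apply: lt0r_neq0.
lra.
Qed.

End N.

Section E.
Context {R : realType}.
Variable n : nat.
Hypothesis n1 : (1 <= n)%N.
Variables f fp : R -> R.
Hypothesis hd : derivative_on_11 f fp.

Lemma node_neq (x : R) k : ~ is_node n x -> (k <= n)%N -> node n k - x != 0.
Proof.
move=> nn kn; rewrite subr_eq0; apply/eqP => e; apply: nn; exists k => //.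
Qed.

Lemma err_id (x : R) : ~ is_node n x -> Dn n x != 0 ->
  Bn n f x - f x =
  - (\sum_(0 <= k < n.+1) (-1) ^+ k * slope f x (node n k)) / Dn n x.
Proof.
move=> nn D0; rewrite /Bn asboolF //.
have key : Nn n f x - f x * Dn n x =
    - \sum_(0 <= k < n.+1) (-1) ^+ k * slope f x (node n k).
  rewrite /Nn /Dn mulr_sumr -sumrB -sumrN; apply: eq_big_nat => k /andP[_ kn].
  have h1 := node_neq x k nn kn.
  have h2 : x - node n k != 0 by rewrite -opprB oppr_eq0.
  rewrite /slope; field; by rewrite h1 h2.
rewrite -key; field; exact: D0.
Qed.

Lemma S_bound (x : R) : x \in `]-1, 1[ ->
  2 * `|\sum_(0 <= k < n.+1) (-1) ^+ k * slope f x (node n k)|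
  <= 2 * Num.max `|Of f x| `|Ef f x| +
     \sum_(0 <= k < n) `|slope f x (node n k) - slope f x (node n k.+1)|.
Proof.
move=> xI; move: (xI); rewrite in_itv /= => /andP[x1 x2].
set G := fun k => slope f x (node n k).
have -> : 2 * `|\sum_(0 <= k < n.+1) (-1) ^+ k * G k| =
    `|2 * \sum_(0 <= k < n.+1) (-1) ^+ k * G k|.
  by rewrite normrM (@ger0_norm _ 2).
rewrite alt_sum_id; apply: le_trans (ler_normD _ _) _; apply: lerD.
  rewrite /G /= (node0 n n1) (noden n n1) -signr_odd.
  have hx1 : x - 1 != 0 by rewrite subr_eq0; apply/eqP => e; lra.
  have hx2 : x + 1 != 0 by apply/eqP => e; lra.
  have hx3 : 1 - x != 0 by rewrite subr_eq0; apply/eqP => e; lra.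
  have hx4 : -1 - x != 0 by apply/eqP => e; lra.
  case: (odd n); rewrite /= ?expr1 ?expr0.
    have -> : slope f x (-1) + -1 * slope f x 1 = - 2 * Of f x.
      by rewrite /slope /Of; field; rewrite hx1 hx2 hx3 hx4.
    rewrite normrM normrN (@ger0_norm _ 2) // ler_pM2l //; by rewrite le_max lexx.
  have -> : slope f x (-1) + 1 * slope f x 1 = - 2 * Ef f x.
    by rewrite /slope /Ef; field; rewrite hx1 hx2 hx3 hx4.
  rewrite normrM normrN (@ger0_norm _ 2) // ler_pM2l //; by rewrite le_max lexx orbT.
apply: le_trans (ler_norm_sum _ _ _) _; apply: ler_sum => k _.
by rewrite normrM normrX normrN1 expr1n mul1r.
Qed.

End E.

Section F.
Context {R : realType}.
Variable n : nat.
Hypothesis n1 : (1 <= n)%N.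
Variables f fp : R -> R.
Hypothesis hd : derivative_on_11 f fp.

Lemma chain_TV (x : R) : x \in `]-1, 1[ -> ~ is_node n x ->
  ((\sum_(0 <= k < n) `|slope f x (node n k) - slope f x (node n k.+1)|)%:E
   <= total_variation (-1) 1 fp)%E.
Proof.
move=> xI nn.
have xI' : x \in `[-1, 1] by move: xI; rewrite !in_itv /= => /andP[h1 h2]; apply/andP; split; lra.
move: (xI); rewrite in_itv /= => /andP[x1 x2].
have [j jn /andP[xl xr]] := @locate R n n1 x xI' nn.
pose p m := if (m <= j)%N then node n m else if m == j.+1 then x else node n m.-1.
have pL : forall m, (m <= j)%N -> p m = node n m by move=> m h; rewrite /p h.
have pJ : p j.+1 = x by rewrite /p ltnn eqxx.
have pR : forall m, (j.+1 < m)%N -> p m = node n m.-1.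
  move=> m h; rewrite /p.
  have -> : (m <= j)%N = false by apply/negbTE; rewrite -ltnNge; lia.
  have -> : (m == j.+1) = false by apply/negbTE; apply/eqP; lia.
  by [].
have p_lt : forall i, (i <= n)%N -> p i < p i.+1.
  move=> i iN.
  have [h|h] := leqP i.+1 j.
    rewrite !pL //; [exact: (@node_lt R n n1) | lia].
  have [e|h'] := eqVneq i j.
    by rewrite e pL // pJ.
  have [e2|h''] := eqVneq i j.+1.
    by rewrite e2 pJ pR.
  rewrite !pR; [|lia|lia]; apply: (@node_lt R n n1); lia.
have p_in : forall m, (m <= n.+1)%N -> -1 <= p m /\ p m <= 1.
  move=> m mN.
  have [h|h] := leqP m j.
    rewrite pL //; have /andP[] := @node_in R n n1 m (ltac:(lia)); by split.
  have [e|h'] := eqVneq m j.+1.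
    by rewrite e pJ; split; lra.
  rewrite pR; last by lia.
  have /andP[] := @node_in R n n1 m.-1 (ltac:(lia)); by split.
pose c i := slope f (p i) (p i.+1).
have : forall i, exists a, (i <= n)%N -> (p i < a < p i.+1) /\ c i = fp a.
  move=> i; case: (leqP i n) => iN; last by exists 0.
  have [a aI ea] := @mvt R f fp hd _ _ (p_in i (ltac:(lia))).1 (p_lt i iN) (p_in i.+1 (ltac:(lia))).2.
  exists a => _; split; first by move: aI; rewrite in_itv.
  have hne : p i.+1 - p i != 0 by rewrite subr_eq0 gt_eqF // p_lt.
  by rewrite /c /slope ea mulfK.
move=> /choice [al Hal].
set G := fun k => slope f x (node n k).
have step1 : \sum_(0 <= k < n) `|G k - G k.+1| <= \sum_(0 <= k < n) `|c k - c k.+1|.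
  apply: (@chain R G c j n jn).
  - by rewrite /G /c pL // pJ slopeC.
  - by rewrite /G /c pJ pR.
  - move=> k kj; rewrite /G /c !pL; [|lia|lia].
    rewrite (slopeC f x (node n k)) (slopeC f x (node n k.+1)).
    apply: between; first exact: (@node_lt R n n1).
    have : node n k.+1 <= node n j :> R by apply: (@node_le R n n1).
    lra.
  - move=> k jk kn; rewrite /G /c !pR; [|lia|lia] => /=.
    apply: between; last exact: (@node_lt R n n1).
    have : node n j.+1 <= node n k :> R by apply: (@node_le R n n1).
    lra.
have e2 : \sum_(0 <= k < n) `|c k - c k.+1| = \sum_(0 <= k < n) `|fp (al k.+1) - fp (al k)|.
  apply: eq_big_nat => k /andP[_ kn].
  have [_ ->] := Hal k (ltnW kn).
  have [_ ->] := Hal k.+1 kn.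
  by rewrite distrC.
have mono : forall i, (i < n)%N -> al i <= al i.+1.
  move=> i iN.
  have [/andP[_ h1] _] := Hal i (ltnW iN).
  have [/andP[h2 _] _] := Hal i.+1 iN.
  apply: ltW; exact: lt_trans h1 h2.
have [a0n tvc] := @tv_chain R fp al n mono.
have s1 : ((\sum_(0 <= k < n) `|G k - G k.+1|)%:E <=
    (\sum_(0 <= k < n) `|c k - c k.+1|)%:E)%E by rewrite lee_fin.
apply: le_trans s1 _.
rewrite e2; apply: le_trans tvc _.
apply: tv_sub => //.
  have [/andP[h _] _] := Hal 0%N (leq0n n).
  by move: h; rewrite pL // (node0 n n1) => /ltW.
have [/andP[_ h] _] := Hal n (leqnn n).
by move: h; rewrite pR //= (noden n n1) => /ltW.
Qed.

End F.

Lemma supnorm_ge {R : realType} (A : set R) (g : R -> R) x :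
  A x -> (`|g x|%:E <= supnorm A g)%E.
Proof. by move=> Ax; apply: ereal_sup_ubound; exists x. Qed.

Theorem theorem3 (R : realType) (f fp : R -> R) (n : nat) :
  BV1 f fp -> (1 <= n)%N ->
  ((n%:R)%:E * supnorm `[(-1)%R, 1%R] (fun x => (Bn n f x - f x)%R)
   <= total_variation (-1)%R 1%R fp * (2^-1)%R%:E
      + maxe (supnorm `](-1)%R, 1%R[ (Of f)) (supnorm `](-1)%R, 1%R[ (Ef f)))%E.
Proof.
move=> [hd _] n1.
set M := (total_variation (-1)%R 1%R fp * (2^-1)%R%:E
      + maxe (supnorm `](-1)%R, 1%R[ (Of f)) (supnorm `](-1)%R, 1%R[ (Ef f)))%E.
have hn0 : 0 < n%:R :> R by rewrite ltr0n.
have z01 : `](-1)%R, 1%R[%classic (0 : R).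
  by rewrite /= in_itv /=; apply/andP; split; lra.
have sO0 : (0 <= supnorm `](-1)%R, 1%R[ (Of f))%E.
  by apply: le_trans _ (@supnorm_ge R _ (Of f) 0 z01); rewrite lee_fin.
have TV0 : (0 <= total_variation (-1)%R 1%R fp)%E.
  by apply: total_variation_ge0; lra.
have M0 : (0 <= M)%E.
  apply: adde_ge0; first by apply: mule_ge0 => //; rewrite lee_fin invr_ge0.
  apply: le_trans sO0 _; by rewrite le_max lexx.
have pt : forall x, x \in `[-1, 1] -> ((n%:R * `|Bn n f x - f x|)%:E <= M)%E.
  move=> x xI.
  have [isn|nn] := pselect (is_node n x).
    by rewrite /Bn asboolT // subrr normr0 mulr0.
  have xI' : x \in `]-1, 1[.
    move: xI; rewrite !in_itv /= => /andP[h1 h2]; apply/andP; split.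
      rewrite lt_neqAle h1 andbT; apply/eqP => e; apply: nn; exists 0%N => //.
      by rewrite (node0 n n1).
    rewrite lt_neqAle h2 andbT; apply/eqP => e; apply: nn; exists n => //.
    by rewrite (noden n n1).
  have [j jn /andP[xl xr]] := @locate R n n1 x xI nn.
  have Db := @Dn_bound R n n1 x j jn xl xr.
  have Dabs : n%:R <= `|Dn n x|.
    apply: le_trans Db _; apply: le_trans (ler_norm _) _.
    by rewrite normrM normrX normrN1 expr1n mul1r.
  have D0 : Dn n x != 0 by rewrite -normr_gt0; exact: lt_le_trans hn0 Dabs.
  rewrite (@err_id R n f x nn D0).
  set S := \sum_(0 <= k < n.+1) (-1) ^+ k * slope f x (node n k).
  have h1 : n%:R * `|- S / Dn n x| <= `|S|.
    rewrite normrM normrN normfV mulrA ler_pdivrMr ?normr_gt0 //.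
    by rewrite mulrC ler_wpM2l.
  have Sb := @S_bound R n n1 f x xI'.
  have TVb := @chain_TV R n n1 f fp hd x xI' nn.
  set Sig := \sum_(0 <= k < n) _ in Sb TVb.
  have h2 : `|S| <= Sig * 2^-1 + Num.max `|Of f x| `|Ef f x| by lra.
  have h3 : ((n%:R * `|- S / Dn n x|)%:E <=
      (Sig * 2^-1 + Num.max `|Of f x| `|Ef f x|)%:E)%E.
    by rewrite lee_fin; exact: le_trans h1 h2.
  apply: le_trans h3 _.
  rewrite /M EFinD; apply: leeD.
    by rewrite EFinM; apply: lee_wpmul2r => //; rewrite lee_fin invr_ge0.
  rewrite EFin_max; apply: le_max2; apply: supnorm_ge => //.
have sb : (supnorm `[(-1)%R, 1%R] (fun x => (Bn n f x - f x)%R) <= (n%:R^-1)%:E * M)%E.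
  apply: ge_ereal_sup => _ [x xI <-].
  have := pt x xI => h.
  have -> : `|Bn n f x - f x| = n%:R^-1 * (n%:R * `|Bn n f x - f x|).
    by rewrite mulrA mulVf ?mul1r // gt_eqF.
  rewrite EFinM; apply: lee_wpmul2l => //; rewrite lee_fin invr_ge0; exact: ltW.
apply: le_trans (lee_wpmul2l _ sb) _; first by rewrite lee_fin; exact: ltW.
by rewrite muleA -EFinM divff ?mul1e // gt_eqF.
Qed.
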